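(* Fix constants $0<r<s<1$. For all sufficiently large $n$ there is an MWIS instance $x$ on at most $n$ vertices such that $\mathrm{cost}(A_\rho,x)=1$ for every $\rho\in(r,s)$ and $\mathrm{cost}(A_\rho,x)=o_n(1)$ for every $\rho\in[0,1]$ with $\rho<r$ or $\rho>s$. This holds for both the adaptive and non-adaptive versions of the heuristics.
   Context: MWIS instance: an undirected graph $G=(V,E)$ with nonnegative vertex weights $w_v$. For $\rho\in[0,1]$, the greedy heuristic $A_\rho$ repeatedly selects, among vertices not yet selected or blocked, one maximizing $w_v/(1+\deg(v))^\rho$ (ties broken lexicographically), adds it to the independent set, and blocks its neighbors. In the non-adaptive version $\deg(v)$ is the degree in the original graph; in the adaptive version it is the degree in the subgraph induced by remaining (unselected, unblocked) vertices. $\mathrm{cost}(A_\rho,x)$ is the total weight of the returned independent set. $o_n(1)$ denotes a quantity tending to $0$ as $n\to\infty$. *)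

(* Defs.v *)
From Stdlib Require Import Reals Lra Lia List Arith Bool.
Import ListNotations.
Open Scope R_scope.

Record mwis := MkMWIS {
  nv  : nat;
  adj : nat -> nat -> bool;
  wt  : nat -> R
}.

Definition wf_mwis (x : mwis) : Prop :=
  (forall u v, adj x u v = adj x v u) /\
  (forall v, adj x v v = false) /\
  (forall v, (v < nv x)%nat -> 0 <= wt x v).

Definition verts (x : mwis) : list nat := seq 0 (nv x).

Definition deg_in (x : mwis) (l : list nat) (v : nat) : nat :=
  length (filter (fun u => adj x v u) l).

(* first element of l (in list order) maximizing f: with l in increasing
   order this breaks ties lexicographically (smallest label wins). *)
Fixpoint best (f : nat -> R) (l : list nat) : option nat :=
  match l with
  | [] => None
  | v :: l' =>
      match best f l' with
      | None => Some v
      | Some u => if Rlt_dec (f v) (f u) then Some u else Some v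
      end
  end.

Definition score (adaptive : bool) (rho : R) (x : mwis) (rem : list nat)
  (v : nat) : R :=
  let d := if adaptive then deg_in x rem v else deg_in x (verts x) v in
  wt x v / Rpower (1 + INR d) rho.

Fixpoint greedy_aux (adaptive : bool) (rho : R) (x : mwis) (fuel : nat)
  (rem sel : list nat) : list nat :=
  match fuel with
  | O => sel
  | S k =>
      match best (score adaptive rho x rem) rem with
      | None => sel
      | Some v =>
          greedy_aux adaptive rho x k
            (filter (fun u => andb (negb (Nat.eqb u v)) (negb (adj x v u))) rem)
            (v :: sel)
      end
  end.

(* The independent set returned by A_rho (fuel nv suffices: each step
   removes the selected vertex). *)
Definition greedy (adaptive : bool) (rho : R) (x : mwis) : list nat :=
  greedy_aux adaptive rho x (nv x) (verts x) [].

Definition cost (adaptive : bool) (rho : R) (x : mwis) : R :=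
  fold_right (fun v acc => wt x v + acc) 0 (greedy adaptive rho x).

(* Main.v *)
Require Import Defs.
From Stdlib Require Import Reals Lra Lia List Arith Bool.
Import ListNotations.
Open Scope R_scope.

Definition sumw (x : mwis) (l : list nat) : R :=
  fold_right (fun v acc => wt x v + acc) 0 l.

Lemma best_none f l : best f l = None -> l = [].
Proof.
  destruct l as [|a l]; simpl; auto.
  destruct (best f l); [destruct (Rlt_dec _ _)|]; discriminate.
Qed.

Lemma best_max f l v : best f l = Some v ->
  In v l /\ forall u, In u l -> f u <= f v.
Proof.
  revert v; induction l as [|a l IH]; simpl; intros v H; [discriminate|].
  destruct (best f l) as [w|] eqn:E.
  - destruct (IH w eq_refl) as [Hw Hm].
    destruct (Rlt_dec (f a) (f w)); injection H as <-.
    + split; auto. intros u [<-|Hu]; [lra|auto].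
    + split; auto. intros u [<-|Hu]; [lra|]. specialize (Hm u Hu); lra.
  - apply best_none in E; subst. injection H as <-. split; auto.
    intros u [<-|[]]; lra.
Qed.

Lemma filter_len_lt (f : nat -> bool) l v : In v l -> f v = false ->
  (length (filter f l) < length l)%nat.
Proof.
  induction l as [|a l IH]; simpl; [tauto|]. intros [<-|H] Hf.
  - rewrite Hf. pose proof (filter_length_le f l) as K. simpl. lia.
  - destruct (f a); simpl; specialize (IH H Hf); lia.
Qed.

Lemma filter_all_true (f : nat -> bool) l : (forall u, In u l -> f u = true) -> filter f l = l.
Proof.
  induction l as [|a l IH]; simpl; intros H; auto.
  rewrite H by auto. rewrite IH; auto.
Qed.

Lemma filter_all_false (f : nat -> bool) l : (forall u, In u l -> f u = false) -> filter f l = [].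
Proof.
  induction l as [|a l IH]; simpl; intros H; auto.
  rewrite H by auto. rewrite IH; auto.
Qed.

Lemma remove_sum x l v : NoDup l -> In v l ->
  sumw x l = wt x v + sumw x (filter (fun u => negb (u =? v)) l).
Proof.
  induction l as [|a l IH]; simpl; [tauto|]. intros ND [<-|H]; inversion ND; subst.
  - rewrite Nat.eqb_refl. simpl. rewrite filter_all_true; auto.
    intros u Hu. destruct (Nat.eqb_spec u a); subst; tauto.
  - destruct (Nat.eqb_spec a v); subst; [tauto|]. simpl. rewrite IH; auto. lra.
Qed.

Lemma sum_zero x l : (forall u, In u l -> wt x u = 0) -> sumw x l = 0.
Proof.
  induction l as [|a l IH]; simpl; intros H; auto. rewrite H, IH; auto. lra.
Qed.

Lemma sum_const x l c : (forall u, In u l -> wt x u = c) -> sumw x l = INR (length l) * c.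
Proof.
  induction l as [|a l IH]; simpl length; intros H; [simpl; lra|].
  change (sumw x (a::l)) with (wt x a + sumw x l). rewrite H by (left; auto). rewrite IH by (intros; apply H; right; auto). rewrite S_INR. ring.
Qed.

Lemma run x ad rho fuel : forall rem sel, NoDup rem ->
  (forall u v, In u rem -> In v rem -> adj x v u = false) ->
  (length rem <= fuel)%nat ->
  sumw x (greedy_aux ad rho x fuel rem sel) = sumw x rem + sumw x sel.
Proof.
  induction fuel as [|k IH]; intros rem sel ND Hi Hl.
  - destruct rem; simpl in *; [lra|lia].
  - simpl. destruct (best (score ad rho x rem) rem) as [v|] eqn:E.
    + destruct (best_max _ _ _ E) as [Hv _].
      assert (Hf : filter (fun u => negb (u =? v) && negb (adj x v u)) rem
                   = filter (fun u => negb (u =? v)) rem).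
      { apply filter_ext_in. intros a Ha. rewrite (Hi a v); auto. apply andb_true_r. }
      rewrite IH; rewrite ?Hf.
      * rewrite (remove_sum x rem v); auto. simpl. lra.
      * apply NoDup_filter; auto.
      * intros a b Ha Hb. apply filter_In in Ha, Hb. apply Hi; tauto.
      * pose proof (filter_len_lt (fun u => negb (u =? v)) rem v Hv).
        simpl in H. rewrite Nat.eqb_refl in H. specialize (H eq_refl). lia.
    + apply best_none in E; subst. simpl. lra.
Qed.

Lemma step x ad rho k rem sel v :
  best (score ad rho x rem) rem = Some v ->
  greedy_aux ad rho x (S k) rem sel =
  greedy_aux ad rho x k (filter (fun u => negb (u =? v) && negb (adj x v u)) rem) (v :: sel).
Proof. intros H. simpl. rewrite H. reflexivity. Qed.

Definition isA (m v : nat) : bool := (2 <=? v) && (v <? m + 2).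
Definition isQ (m v : nat) : bool := (m + 2 <=? v) && (v <? m + m + 2).
Definition adj0 (m u v : nat) : bool :=
  ((u =? 0) && (1 <=? v) && (v <? m + m + 2)) || ((u =? 1) && isA m v)
  || (isA m u && isQ m v).
Definition gadj (m u v : nat) : bool := adj0 m u v || adj0 m v u.
Definition La (m : nat) := ln (INR m + 3).
Definition Lb (m : nat) := ln (2 * INR m + 2).
Definition Lc (m : nat) := ln (INR m + 2).
Definition gwt (r s : R) (m v : nat) : R :=
  if v =? 0 then exp (r * (Lb m - La m)) / INR m
  else if v =? 1 then exp (s * (Lc m - La m)) / INR m
  else if isA m v then / INR m else 0.
Definition G (r s : R) (m : nat) : mwis := MkMWIS (S (S (m + m))) (gadj m) (gwt r s m).

Ltac bt := unfold gadj, adj0, isA, isQ in *;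
  repeat match goal with
  | |- context [Nat.eqb ?a ?b] => destruct (Nat.eqb_spec a b); try (exfalso; lia)
  | |- context [Nat.leb ?a ?b] => destruct (Nat.leb_spec a b); try (exfalso; lia)
  | |- context [Nat.ltb ?a ?b] => destruct (Nat.ltb_spec a b); try (exfalso; lia)
  end; simpl; try reflexivity; try (exfalso; lia).

Lemma verts_G r s m : verts (G r s m) = 0%nat :: 1%nat :: seq 2 m ++ seq (2 + m) m.
Proof. unfold verts. simpl. rewrite seq_app. reflexivity. Qed.

Lemma G_wf r s m : (2 <= m)%nat -> 0 < r -> 0 < s -> wf_mwis (G r s m).
Proof.
  intros Hm Hr Hs. split; [|split].
  - intros u v; simpl. unfold gadj. apply orb_comm.
  - intros v; simpl. bt.
  - intros v _; simpl. unfold gwt.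
    assert (0 < INR m) by (apply lt_0_INR; lia).
    destruct (v =? 0); [|destruct (v =? 1); [|destruct (isA m v)]].
    + apply Rlt_le, Rdiv_lt_0_compat; auto; apply exp_pos.
    + apply Rlt_le, Rdiv_lt_0_compat; auto; apply exp_pos.
    + apply Rlt_le, Rinv_0_lt_compat; auto.
    + lra.
Qed.

Lemma inA u m : In u (seq 2 m) <-> (2 <= u < 2 + m)%nat.
Proof. apply in_seq. Qed.
Lemma inQ u m : In u (seq (2 + m) m) <-> (2 + m <= u < 2 + m + m)%nat.
Proof. apply in_seq. Qed.

Lemma deg0 r s m : deg_in (G r s m) (verts (G r s m)) 0 = S (m + m).
Proof.
  unfold deg_in. rewrite verts_G. simpl adj.
  simpl filter at 1.
  replace (gadj m 0 0) with false by bt. replace (gadj m 0 1) with true by bt.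
  rewrite filter_app, !filter_all_true.
  - simpl. rewrite length_app, !length_seq. reflexivity.
  - intros u Hu. apply inQ in Hu. bt.
  - intros u Hu. apply inA in Hu. bt.
Qed.

Lemma deg1 r s m : deg_in (G r s m) (verts (G r s m)) 1 = S m.
Proof.
  unfold deg_in. rewrite verts_G. simpl adj.
  simpl filter at 1.
  replace (gadj m 1 0) with true by bt. replace (gadj m 1 1) with false by bt.
  rewrite filter_app, filter_all_true, filter_all_false.
  - simpl. rewrite app_nil_r, !length_seq. reflexivity.
  - intros u Hu. apply inQ in Hu. bt.
  - intros u Hu. apply inA in Hu. bt.
Qed.

Lemma degA r s m a : (2 <= a < 2 + m)%nat ->
  deg_in (G r s m) (verts (G r s m)) a = S (S m).
Proof.
  intros Ha. unfold deg_in. rewrite verts_G. simpl adj.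
  simpl filter at 1.
  replace (gadj m a 0) with true by bt. replace (gadj m a 1) with true by bt.
  rewrite filter_app, (filter_all_false _ (seq 2 m)), (filter_all_true _ (seq (2+m) m)).
  - simpl. rewrite !length_seq. reflexivity.
  - intros u Hu. apply inQ in Hu. bt.
  - intros u Hu. apply inA in Hu. bt.
Qed.

Lemma exp_div3 W M Y : 0 < M -> exp W / M / exp Y = exp (W - ln M - Y).
Proof.
  intros HM. unfold Rminus. rewrite !exp_plus, !exp_Ropp, exp_ln by auto.
  field. split; [apply Rgt_not_eq, exp_pos| lra].
Qed.

Lemma score_eq ad rho x v :
  score ad rho x (verts x) v = wt x v / Rpower (1 + INR (deg_in x (verts x) v)) rho.
Proof. unfold score. destruct ad; reflexivity. Qed.

Definition Ea m rho := 0 - ln (INR m) - rho * La m.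
Definition Eb r m rho := r * (Lb m - La m) - ln (INR m) - rho * Lb m.
Definition Ec s m rho := s * (Lc m - La m) - ln (INR m) - rho * Lc m.

Lemma score0 ad rho r s m : (2 <= m)%nat ->
  score ad rho (G r s m) (verts (G r s m)) 0 = exp (Eb r m rho).
Proof.
  intros Hm. rewrite score_eq, deg0. unfold Rpower.
  replace (1 + INR (S (m + m))) with (2 * INR m + 2)
    by (rewrite S_INR, plus_INR; lra). cbn [wt G]. unfold gwt. cbn [Nat.eqb].
  rewrite exp_div3. reflexivity. apply lt_0_INR; lia.
Qed.

Lemma score1 ad rho r s m : (2 <= m)%nat ->
  score ad rho (G r s m) (verts (G r s m)) 1 = exp (Ec s m rho).
Proof.
  intros Hm. rewrite score_eq, deg1. unfold Rpower.
  replace (1 + INR (S m)) with (INR m + 2)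
    by (rewrite S_INR; lra). cbn [wt G]. unfold gwt. cbn [Nat.eqb].
  rewrite exp_div3. reflexivity. apply lt_0_INR; lia.
Qed.

Lemma wtA r s m a : (2 <= a < 2 + m)%nat -> wt (G r s m) a = / INR m.
Proof. intros Ha. simpl. unfold gwt. bt. Qed.

Lemma wtQ r s m a : (2 + m <= a)%nat -> wt (G r s m) a = 0.
Proof. intros Ha. simpl. unfold gwt. bt. Qed.

Lemma scoreA ad rho r s m a : (2 <= m)%nat -> (2 <= a < 2 + m)%nat ->
  score ad rho (G r s m) (verts (G r s m)) a = exp (Ea m rho).
Proof.
  intros Hm Ha. rewrite score_eq, degA, wtA by auto. unfold Rpower.
  replace (1 + INR (S (S m))) with (INR m + 3)
    by (rewrite !S_INR; lra).
  assert (0 < INR m) by (apply lt_0_INR; lia).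
  unfold Ea. rewrite <- exp_div3 by auto. rewrite exp_0. unfold La. field.
  split; [lra|apply Rgt_not_eq, exp_pos].
Qed.

Lemma scoreQ ad rho r s m a : (2 + m <= a)%nat ->
  score ad rho (G r s m) (verts (G r s m)) a = 0.
Proof. intros Ha. rewrite score_eq, wtQ by auto. unfold Rdiv. ring. Qed.

Lemma Lfacts m : (2 <= m)%nat -> La m < Lb m /\ Lc m < La m /\ Lb m - La m < ln 2.
Proof.
  intros Hm. assert (H2 : 2 <= INR m) by (apply (le_INR 2); lia).
  unfold La, Lb, Lc. split; [|split].
  - apply ln_increasing; lra.
  - apply ln_increasing; lra.
  - replace (2 * INR m + 2) with (2 * ((2 * INR m + 2)/2)) by field.
    rewrite ln_mult by lra.
    assert (ln ((2 * INR m + 2) / 2) < ln (INR m + 3)) by (apply ln_increasing; lra).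
    lra.
Qed.

Ltac bt2 := unfold gadj, adj0, isA, isQ in *;
  repeat match goal with
  | |- context [Nat.eqb ?a ?b] => destruct (Nat.eqb_spec a b); try (exfalso; lia)
  | |- context [Nat.leb ?a ?b] => destruct (Nat.leb_spec a b); try (exfalso; lia)
  | |- context [Nat.ltb ?a ?b] => destruct (Nat.ltb_spec a b); try (exfalso; lia)
  end; simpl; intros; try discriminate; try lia.

Definition remv m v (l : list nat) :=
  filter (fun u => negb (u =? v) && negb (gadj m v u)) l.

Lemma verts_seq r s m : verts (G r s m) = seq 0 (S (S (m + m))).
Proof. reflexivity. Qed.

Lemma first_cost ad rho r s m v :
  best (score ad rho (G r s m) (verts (G r s m))) (verts (G r s m)) = Some v ->
  (forall u w, In u (remv m v (verts (G r s m))) -> In w (remv m v (verts (G r s m))) ->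
     gadj m w u = false) ->
  cost ad rho (G r s m) = sumw (G r s m) (remv m v (verts (G r s m))) + wt (G r s m) v.
Proof.
  intros Hb Hi. unfold cost, greedy. change (nv (G r s m)) with (S (S (m + m))).
  rewrite step with (v := v) by exact Hb.
  change (fold_right (fun v0 acc => wt (G r s m) v0 + acc) 0) with (sumw (G r s m)).
  rewrite run.
  - simpl. unfold remv. simpl adj. lra.
  - apply NoDup_filter. apply seq_NoDup.
  - exact Hi.
  - destruct (best_max _ _ _ Hb) as [Hv _].
    assert (K : (length (filter (fun u => negb (u =? v) && negb (adj (G r s m) v u))
       (verts (G r s m))) < length (verts (G r s m)))%nat).
    { apply filter_len_lt with v; auto. cbv beta. rewrite Nat.eqb_refl. reflexivity. }
    rewrite verts_seq, length_seq in K. rewrite verts_seq. lia.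
Qed.

Lemma in_remv m v u : In u (remv m v (seq 0 (S (S (m + m))))) ->
  (u < S (S (m + m)))%nat /\ negb (u =? v) && negb (gadj m v u) = true.
Proof. unfold remv. rewrite filter_In, in_seq. intros [H1 H2]. split; auto. lia. Qed.

Lemma verts_seq0 r s m : verts (G r s m) = seq 0 (S (S (m + m))).
Proof. reflexivity. Qed.

Lemma cat u m : (u < S (S (m + m)))%nat ->
  u = 0%nat \/ u = 1%nat \/ (2 <= u < 2 + m)%nat \/ (2 + m <= u)%nat.
Proof. lia. Qed.

Lemma best_is f l w : In w l -> (forall u, In u l -> u <> w -> f u < f w) ->
  best f l = Some w.
Proof.
  intros Hw H. destruct (best f l) as [v|] eqn:E.
  - destruct (best_max _ _ _ E) as [Hv Hm].
    destruct (Nat.eq_dec v w); [subst; auto|].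
    specialize (H v Hv n). specialize (Hm w Hw). lra.
  - apply best_none in E; subst; contradiction.
Qed.

Lemma E_ba r m rho : Eb r m rho - Ea m rho = (r - rho) * (Lb m - La m).
Proof. unfold Eb, Ea. ring. Qed.
Lemma E_ca s m rho : Ec s m rho - Ea m rho = (s - rho) * (Lc m - La m).
Proof. unfold Ec, Ea. ring. Qed.

Lemma in_verts r s m u : In u (verts (G r s m)) -> (u < S (S (m + m)))%nat.
Proof. rewrite verts_seq, in_seq. lia. Qed.

Lemma cost_low ad rho r s m : (2 <= m)%nat -> rho < r -> r < s ->
  cost ad rho (G r s m) = wt (G r s m) 0.
Proof.
  intros Hm H1 H2. destruct (Lfacts m Hm) as (L1 & L2 & _).
  assert (Hba := E_ba r m rho). assert (Hca := E_ca s m rho).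
  assert (Eab : Ea m rho < Eb r m rho) by nra.
  assert (Eca : Ec s m rho < Ea m rho) by nra.
  assert (Hb : best (score ad rho (G r s m) (verts (G r s m))) (verts (G r s m)) = Some 0%nat).
  { apply best_is. rewrite verts_seq; apply in_seq; lia.
    intros u Hu Hne. apply in_verts in Hu. rewrite score0 by auto.
    destruct (cat u m Hu) as [->|[->|[HA|HQ]]]; [congruence| | |].
    - rewrite score1 by auto. apply exp_increasing. lra.
    - rewrite scoreA by auto. apply exp_increasing. lra.
    - rewrite scoreQ by auto. apply exp_pos. }
  assert (Hn : forall u, ~ In u (remv m 0 (verts (G r s m)))).
  { intros u Hu. rewrite verts_seq in Hu. apply in_remv in Hu. destruct Hu as [Hu Hb2].
    revert Hb2. bt2. }
  rewrite (first_cost _ _ _ _ _ _ Hb).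
  - rewrite sum_zero. lra. intros u Hu; exfalso; eapply Hn; eauto.
  - intros u w Hu; exfalso; eapply Hn; eauto.
Qed.

Lemma cost_high ad rho r s m : (2 <= m)%nat -> s < rho -> r < s ->
  cost ad rho (G r s m) = wt (G r s m) 1.
Proof.
  intros Hm H1 H2. destruct (Lfacts m Hm) as (L1 & L2 & _).
  assert (Hba := E_ba r m rho). assert (Hca := E_ca s m rho).
  assert (Eab : Eb r m rho < Ea m rho) by nra.
  assert (Eca : Ea m rho < Ec s m rho) by nra.
  assert (Hb : best (score ad rho (G r s m) (verts (G r s m))) (verts (G r s m)) = Some 1%nat).
  { apply best_is. rewrite verts_seq; apply in_seq; lia.
    intros u Hu Hne. apply in_verts in Hu. rewrite score1 by auto.
    destruct (cat u m Hu) as [->|[->|[HA|HQ]]]; [| congruence | |].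
    - rewrite score0 by auto. apply exp_increasing. lra.
    - rewrite scoreA by auto. apply exp_increasing. lra.
    - rewrite scoreQ by auto. apply exp_pos. }
  assert (Hn : forall u, In u (remv m 1 (verts (G r s m))) -> (2 + m <= u)%nat).
  { intros u Hu. rewrite verts_seq in Hu. apply in_remv in Hu. destruct Hu as [Hu Hb2].
    revert Hb2. bt2. }
  rewrite (first_cost _ _ _ _ _ _ Hb).
  - rewrite sum_zero. lra. intros u Hu. apply wtQ. auto.
  - intros u w Hu Hw. apply Hn in Hu. apply Hn in Hw. bt2.
Qed.

Lemma cost_mid ad rho r s m : (2 <= m)%nat -> r < rho -> rho < s ->
  cost ad rho (G r s m) = 1.
Proof.
  intros Hm H1 H2. destruct (Lfacts m Hm) as (L1 & L2 & _).
  assert (Hba := E_ba r m rho). assert (Hca := E_ca s m rho).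
  assert (Eab : Eb r m rho < Ea m rho) by nra.
  assert (Eca : Ec s m rho < Ea m rho) by nra.
  destruct (best (score ad rho (G r s m) (verts (G r s m))) (verts (G r s m))) as [v|] eqn:Hb.
  2:{ apply best_none in Hb. rewrite verts_seq in Hb. discriminate. }
  destruct (best_max _ _ _ Hb) as [Hv Hmax].
  assert (HvA : (2 <= v < 2 + m)%nat).
  { assert (H2in : In 2%nat (verts (G r s m))) by (rewrite verts_seq; apply in_seq; lia).
    specialize (Hmax 2%nat H2in). rewrite (scoreA _ _ _ _ _ 2) in Hmax by lia.
    apply in_verts in Hv. destruct (cat v m Hv) as [->|[->|[HA|HQ]]]; auto; exfalso.
    - rewrite score0 in Hmax by auto. apply exp_increasing in Eab. lra.
    - rewrite score1 in Hmax by auto. apply exp_increasing in Eca. lra.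
    - rewrite scoreQ in Hmax by auto. pose proof (exp_pos (Ea m rho)). lra. }
  assert (Hrem : remv m v (verts (G r s m)) = filter (fun u => negb (u =? v)) (seq 2 m)).
  { unfold remv. rewrite verts_G. cbn [filter].
    replace (negb (0 =? v) && negb (gadj m v 0)) with false by (symmetry; bt2).
    replace (negb (1 =? v) && negb (gadj m v 1)) with false by (symmetry; bt2).
    rewrite filter_app, (filter_all_false _ (seq (2 + m) m)), app_nil_r.
    - apply filter_ext_in. intros a Ha. apply inA in Ha.
      replace (gadj m v a) with false by (symmetry; bt2). apply andb_true_r.
    - intros u Hu. apply inQ in Hu. bt2. }
  rewrite (first_cost _ _ _ _ _ _ Hb).
  - rewrite Hrem.
    assert (HS := remove_sum (G r s m) (seq 2 m) v (seq_NoDup _ _) (proj2 (inA v m) HvA)).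
    rewrite sum_const with (c := / INR m) in HS.
    + rewrite length_seq in HS. rewrite <- Rinv_r_sym in HS.
      * lra.
      * apply Rgt_not_eq, lt_0_INR; lia.
    + intros u Hu. apply wtA. apply inA; auto.
  - rewrite Hrem. intros u w Hu Hw. apply filter_In in Hu, Hw.
    destruct Hu as [Hu _]; destruct Hw as [Hw _]. apply inA in Hu, Hw. bt2.
Qed.

Lemma bound_gen ad rho r s m : (2 <= m)%nat -> 0 < r -> r < s -> s < 1 ->
  (rho < r \/ s < rho) ->
  0 <= cost ad rho (G r s m) <= 2 / INR m.
Proof.
  intros Hm Hr Hrs Hs1 Hrho. destruct (Lfacts m Hm) as (L1 & L2 & L3).
  assert (HM : 0 < INR m) by (apply lt_0_INR; lia).
  assert (Hi : 0 < / INR m) by (apply Rinv_0_lt_compat; auto).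
  destruct Hrho as [H|H].
  - rewrite cost_low by auto. cbn [wt G]. unfold gwt. cbn [Nat.eqb].
    assert (exp (r * (Lb m - La m)) <= 2).
    { rewrite <- (exp_ln 2) by lra. apply Rlt_le, exp_increasing. nra. }
    pose proof (exp_pos (r * (Lb m - La m))). unfold Rdiv. split; nra.
  - rewrite cost_high by auto. cbn [wt G]. unfold gwt. cbn [Nat.eqb].
    assert (exp (s * (Lc m - La m)) <= 1).
    { rewrite <- exp_0. apply Rlt_le, exp_increasing. nra. }
    pose proof (exp_pos (s * (Lc m - La m))). unfold Rdiv. split; nra.
Qed.

Theorem mainTheorem11 :
  forall r s : R, 0 < r -> r < s -> s < 1 ->
  forall adaptive : bool,
  exists (N : nat) (X : nat -> mwis),
    (forall n : nat, (N <= n)%nat -> wf_mwis (X n) /\ (nv (X n) <= n)%nat) /\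
    (forall n : nat, (N <= n)%nat ->
       forall rho : R, r < rho < s -> cost adaptive rho (X n) = 1) /\
    (forall rho : R, 0 <= rho <= 1 -> (rho < r \/ s < rho) ->
       Un_cv (fun n => cost adaptive rho (X n)) 0).
Proof.
  intros r s Hr Hrs Hs ad.
  exists 6%nat, (fun n => G r s (n / 2 - 1)).
  split; [|split].
  - intros n Hn. assert (Hm : (2 <= n / 2 - 1)%nat).
    { assert (3 <= n / 2)%nat by (apply Nat.div_le_lower_bound; lia). lia. }
    split. apply G_wf; auto; lra.
    cbn [nv G]. pose proof (Nat.Div0.mul_div_le n 2). lia.
  - intros n Hn rho [H1 H2]. apply cost_mid; auto.
    assert (3 <= n / 2)%nat by (apply Nat.div_le_lower_bound; lia). lia.
  - intros rho _ Hrho eps Heps.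
    destruct (INR_unbounded (2 / eps)) as [K HK].
    exists (2 * K + 6)%nat. intros n Hn.
    assert (Hm : (K + 2 <= n / 2 - 1)%nat).
    { assert (K + 3 <= n / 2)%nat by (apply Nat.div_le_lower_bound; lia). lia. }
    destruct (bound_gen ad rho r s (n / 2 - 1)) as [B1 B2]; auto; try lia.
    unfold R_dist. rewrite Rminus_0_r, Rabs_pos_eq by auto.
    assert (HK2 : INR K <= INR (n / 2 - 1)) by (apply le_INR; lia).
    assert (0 < INR (n / 2 - 1)) by (apply lt_0_INR; lia).
    apply Rle_lt_trans with (1 := B2).
    apply Rmult_lt_reg_r with (INR (n/2 - 1)); auto.
    unfold Rdiv. rewrite Rmult_assoc, Rinv_l by lra.
    assert (2 < eps * INR K).
    { apply Rmult_lt_reg_r with (/ eps). apply Rinv_0_lt_compat; auto.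
      replace (eps * INR K * / eps) with (INR K) by (field; lra). unfold Rdiv in HK. lra. }
    nra.
Qed.
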